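(* Let $\varepsilon>0$, $\beta\in(0,1)$, $\delta\in(0,1)$, and let $G$ be a graph with at least one edge. Run: set $T=-\frac{8}{\varepsilon}\ln\frac4\beta$, $\tilde T=T+\mathrm{Lap}(4/\varepsilon)$; for $\tau=1,2,4,8,\dots$ compute $\tilde Q_\tau=Q_{\mathrm{Del\text{-}N}}(G,\tau)+\mathrm{Lap}(4/\varepsilon)$ and stop at the first $\tau$ with $\tilde Q_\tau>\tilde T$; then output $$\tau^*=\tau+|Q_{\mathrm{Del\text{-}N}}(G,\tau)|+\mathrm{Lap}(2/\varepsilon)+\frac2\varepsilon\ln\max\Big(\frac1\delta,\frac2\beta\Big)+1.$$ Then with probability at least $1-\beta$, $$\tau^*\le2\deg(G)+\frac8\varepsilon\ln\log(4\deg(G))+\frac{16}{\varepsilon}\ln\frac4\beta+\frac4\varepsilon\ln\max\Big(\frac1\delta,\frac2\beta\Big)+1$$ and $$N_{\tau^*}(G)\le\frac8\varepsilon\ln\log(4\deg(G))+\frac{16}\varepsilon\ln\frac4\beta.$$ Furthermore, with probability at least $1-\delta$, $\tau^*+N_{\tau^*}(G)\le2\tau^*$.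
   Context: Graphs are finite, simple, undirected; $\deg(G)$ is the maximum degree; $N_t(G)$ is the number of nodes of $G$ of degree at least $t$. $H\subseteq G$ means $H$ is obtained from $G$ by deleting a set of nodes with all their incident edges. $Q_{\mathrm{Del\text{-}N}}(G,\tau)=-\min\{|V(G)|-|V(G^* )|: G^*\subseteq G,\ \deg(G^* )\le\tau\}$. $\mathrm{Lap}(b)$ has density $\frac1{2b}e^{-|x|/b}$; all draws are independent. $\ln$ is the natural logarithm and $\log$ the base-2 logarithm (counting the doubling steps $\tau=1,2,4,\dots$). *)

(* Defs.v *)
From HB Require Import structures.
From mathcomp Require Import all_boot all_order all_algebra.
From mathcomp Require Import all_classical all_reals all_analysis.
Set Implicit Arguments. Unset Strict Implicit. Unset Printing Implicit Defensive.
Import Order.TTheory GRing.Theory Num.Theory.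
Local Open Scope classical_set_scope.
Local Open Scope ring_scope.

Definition simple_graph (V : finType) (e : rel V) : Prop :=
  symmetric e /\ irreflexive e.

(* degree of x in the induced subgraph G[S] (S = nodes kept) *)
Definition sdeg (V : finType) (e : rel V) (S : {set V}) (x : V) : nat :=
  #|[set y in S | e x y]|.

Definition maxdeg_sub (V : finType) (e : rel V) (S : {set V}) : nat :=
  \max_(x in S) sdeg e S x.

Definition maxdeg (V : finType) (e : rel V) : nat := maxdeg_sub e [set: V].

Definition gdeg (V : finType) (e : rel V) (x : V) : nat := sdeg e [set: V] x.

Definition delN_cost (V : finType) (e : rel V) (tau : nat) : nat :=
  \big[minn/ #|V|]_(S : {set V} | (maxdeg_sub e S <= tau)%N) (#|V| - #|S|)%N.

Definition Q_delN {R : realType} (V : finType) (e : rel V) (tau : nat) : R :=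
  - (delN_cost e tau)%:R.

Definition N_at_least {R : realType} (V : finType) (e : rel V) (t : R) : nat :=
  #|[set x : V | t <= (gdeg e x)%:R]|.

Definition log2 {R : realType} (x : R) : R := ln x / ln 2.

Definition laplace_pdf {R : realType} (b : R) (x : R) : R :=
  (2 * b)^-1 * expR (- `|x| / b).

Definition is_laplace {R : realType} d (Omega : measurableType d)
  (P : probability Omega R) (b : R) (X : Omega -> R) : Prop :=
  measurable_fun setT X /\
  forall A : set R, measurable A ->
    P (X @^-1` A) = (\int[@lebesgue_measure R]_(x in A) (laplace_pdf b x)%:E)%E.

Definition mutually_independent {R : realType} d (Omega : measurableType d)
  (P : probability Omega R) (X : nat -> Omega -> R) : Prop :=
  forall (s : seq nat) (A : nat -> set R), uniq s ->
    (forall i, i \in s -> measurable (A i)) ->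
    P (\bigcap_(i in [set i | i \in s]) (X i @^-1` A i)) =
    (\prod_(i <- s) P (X i @^-1` A i))%E.

(* Noise family X : nat -> Omega -> R:
     X 0        : threshold noise, Lap(4/eps)
     X 1        : final noise, Lap(2/eps)
     X (i.+2)   : noise added to Q_{Del-N}(G, 2^i), Lap(4/eps)          *)
Definition threshold {R : realType} (eps beta : R) : R :=
  - (8 / eps) * ln (4 / beta).

Definition round_passes {R : realType} (V : finType) (e : rel V) (eps beta : R)
  d (Omega : measurableType d) (X : nat -> Omega -> R) (i : nat) (w : Omega) : Prop :=
  Q_delN e (2 ^ i) + X i.+2 w > threshold eps beta + X 0%N w.

Definition stops_at {R : realType} (V : finType) (e : rel V) (eps beta : R)
  d (Omega : measurableType d) (X : nat -> Omega -> R) (i : nat) (w : Omega) : Prop :=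
  round_passes e eps beta X i w /\
  forall j, (j < i)%N -> ~ round_passes e eps beta X j w.

Definition tau_star {R : realType} (V : finType) (e : rel V) (eps beta delta : R)
  d (Omega : measurableType d) (X : nat -> Omega -> R) (i : nat) (w : Omega) : R :=
  (2 ^ i)%:R + `|Q_delN e (2 ^ i)| + X 1%N w
  + (2 / eps) * ln (Num.max (delta^-1) (2 / beta)) + 1.

(* Main.v *)
Require Import Defs.
From HB Require Import structures.
From mathcomp Require Import all_boot all_order all_algebra.
From mathcomp Require Import all_classical all_reals all_analysis.
From mathcomp Require Import ring lra.
From Stdlib Require Import Lia.
From mathcomp Require Import zify.
Import Order.TTheory GRing.Theory Num.Theory.
Import numFieldTopology.Exports.
Local Open Scope classical_set_scope.
Local Open Scope ring_scope.
Section S.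
Context {R : realType}.
Local Notation mu := (@lebesgue_measure R).

Lemma cont_pdf (b : R) : continuous (laplace_pdf b).
Proof.
move=> x; rewrite /laplace_pdf.
apply: (@continuousM _ R^o (fun=> (2 * b)^-1) (fun x => expR (- `|x| / b))).
  exact: cst_continuous.
apply: continuous_comp; last exact: continuous_expR.
apply: (@continuousM _ R^o (fun x => - `|x|) (fun=> b^-1)); last exact: cst_continuous.
apply: (@continuousN _ R^o); exact: (@norm_continuous _ R^o).
Qed.

Lemma pdf_ge0 (b x : R) : 0 < b -> 0 <= laplace_pdf b x.
Proof. by move=> b0; rewrite /laplace_pdf mulr_ge0 ?expR_ge0 // invr_ge0 mulr_ge0 // ltW. Qed.

Lemma dF (b x : R) : b != 0 -> is_derive x 1 (fun x => - (expR (- x / b) / 2)) (expR (- x / b) / (2 * b)).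
Proof.
move=> b0.
have h1 : is_derive x 1 (fun x : R => - x / b) (- b^-1).
  have -> : (fun x : R => - x / b) = (fun x => (- b^-1) * x).
    by apply/funext => y; rewrite mulrC mulrN mulNr.
  have := @is_deriveZ R R^o R^o id (- b^-1) x 1 1 _.
  move=> H; have := H (is_derive_id _ _).
  by congr is_derive; rewrite /GRing.scale/= mulr1.
have h2 := @is_derive1_comp R expR (fun x : R => - x / b) x _ _ _ h1.
have h3 : is_derive x 1 (fun x : R => - (expR (- x / b) / 2)) (- ((expR (- x / b) * - b^-1) / 2)).
  apply: is_deriveN.
  have -> : (fun x : R => expR (- x / b) / 2) = (fun x => 2^-1 *: (expR \o (fun x => - x / b)) x).
    by apply/funext => y; rewrite /GRing.scale /= mulrC.
  have -> : (expR (- x / b) * - b^-1) / 2 = 2^-1 *: (expR (- x / b) * - b^-1).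
    by rewrite /GRing.scale /= mulrC.
  exact: is_deriveZ.
suff -> : expR (- x / b) / (2 * b) = - ((expR (- x / b) * - b^-1) / 2) by [].
by field; rewrite b0.
Qed.
Lemma upper_int (b t : R) : 0 < b -> 0 <= t ->
  (\int[mu]_(x in `[t, +oo[) (laplace_pdf b x)%:E = (expR (- t / b) / 2)%:E)%E.
Proof.
move=> b0 t0.
have b0' : b != 0 by rewrite gt_eqF.
rewrite (@ge0_continuous_FTC2y _ (laplace_pdf b) (fun x => - (expR (- x / b) / 2)) t 0).
- rewrite -EFinB; congr EFin. by rewrite sub0r opprK.
- by move=> x _; exact: pdf_ge0.
- exact/continuous_subspaceT/cont_pdf.
- rewrite -oppr0; apply: cvgN.
  rewrite -[X in _ --> X](mul0r (2^-1 : R)).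
  apply: cvgMl.
  have -> : (fun x : R => expR (- x / b)) = (fun z => expR (- z)) \o (fun z => b^-1 * z).
    by apply/funext => x /=; rewrite mulNr mulrC.
  apply: (@cvg_comp _ _ _ _ _ _ (pinfty_nbhs R)); last exact: cvgr_expR.
  apply: gt0_cvgMry; first by rewrite invr_gt0.
  exact: cvg_id.
- by move=> x _; exact: (@ex_derive _ _ _ _ _ _ _ (dF b x b0')).
- apply: cvg_at_right_filter.
  have : {for t, continuous (fun x : R => - (expR (- x / b) / 2))}.
    by apply: differentiable_continuous; apply/derivable1_diffP; exact: (@ex_derive _ _ _ _ _ _ _ (dF b t b0')).
  by [].
- move=> x; rewrite in_itv /= andbT => tx.
  rewrite derive1E (@derive_val _ _ _ _ _ _ _ (dF b x b0')) /laplace_pdf ger0_norm; last by apply: (le_trans t0); exact: ltW.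
  by rewrite mulrC mulNr.
Qed.
Lemma lower_int (b t : R) : 0 < b -> 0 <= t ->
  (\int[mu]_(x in `]-oo, (- t)%R]) (laplace_pdf b x)%:E = (expR (- t / b) / 2)%:E)%E.
Proof.
move=> b0 t0.
rewrite ge0_integration_by_substitutionNy.
- rewrite -(@upper_int b t b0 t0); apply: eq_integral => x _.
  by rewrite /= /laplace_pdf normrN.
- exact/continuous_subspaceT/cont_pdf.
- by move=> x _; exact: pdf_ge0.
Qed.
End S.
Section G.
Variables (V : finType) (e : rel V).

Lemma delN_spec tau : exists S : {set V},
  (maxdeg_sub e S <= tau)%N /\ delN_cost e tau = (#|V| - #|S|)%N.
Proof.
rewrite /delN_cost.
apply: (big_ind (fun v => exists S : {set V}, (maxdeg_sub e S <= tau)%N /\ v = (#|V| - #|S|)%N)).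
- exists (finset.set0 : {set V}); split; last by rewrite cards0 subn0.
  by rewrite /maxdeg_sub big_pred0 // => x; rewrite finset.in_set0.
- move=> a b [Sa [Ha ->]] [Sb [Hb ->]].
  case: (leqP (#|V| - #|Sa|) (#|V| - #|Sb|)) => h.
    by exists Sa; split => //; apply/minn_idPl.
  by exists Sb; split => //; apply/minn_idPr; exact: ltnW.
- by move=> S HS; exists S.
Qed.

Lemma bigmin_le (I : eqType) (r : seq I) (P : pred I) (F : I -> nat) x i0 :
  i0 \in r -> P i0 -> (\big[minn/x]_(i <- r | P i) F i <= F i0)%N.
Proof.
elim: r => // a r IH; rewrite inE big_cons => /orP [/eqP <- | /IH h] Pi0.
  by rewrite Pi0 geq_minl.
by case: (P a) => /=; rewrite ?geq_min (h Pi0) ?orbT.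
Qed.

Lemma delN_le tau (S : {set V}) : (maxdeg_sub e S <= tau)%N -> (delN_cost e tau <= #|V| - #|S|)%N.
Proof.
move=> HS; rewrite /delN_cost; apply: bigmin_le => //; exact: mem_index_enum.
Qed.

Lemma delN0 tau : (maxdeg e <= tau)%N -> delN_cost e tau = 0%N.
Proof.
move=> h; apply/eqP; rewrite -leqn0.
by have := @delN_le tau [set: V] h; rewrite cardsT subnn.
Qed.

Lemma N_atE {R : realType} (t : R) :
  N_at_least e t = #|finset (fun x => t <= (gdeg e x)%:R)|.
Proof.
apply: eq_card => x; rewrite finset.in_set; apply/idP/idP => [/set_mem // | h].
exact: mem_set.
Qed.

Lemma N_le_delN {R : realType} tau (t : R) :
  ((tau + delN_cost e tau)%:R < t) -> (N_at_least e t <= delN_cost e tau)%N.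
Proof.
move=> ht; have [S [HS hS]] := delN_spec tau; rewrite hS in ht *.
have hc : #|~: S| = (#|V| - #|S|)%N by rewrite -(cardsC S) addKn.
rewrite -hc N_atE; apply: subset_leq_card; apply/fintype.subsetP => x.
rewrite !inE => hx; apply/negP => xS.
have h1 : (sdeg e S x <= tau)%N.
  apply: leq_trans HS; rewrite /maxdeg_sub (bigD1 x) //=; exact: leq_maxl.
have h2 : (gdeg e x <= sdeg e S x + #|~: S|)%N.
  rewrite /gdeg /sdeg; apply: leq_trans (leq_card_setU _ _).
  apply: subset_leq_card; apply/fintype.subsetP => y; rewrite !inE /= => exy.
  by case: (y \in S) => //=; rewrite exy.
have h3 : (gdeg e x <= tau + (#|V| - #|S|))%N.
  by rewrite -hc; apply: (leq_trans h2); rewrite leq_add2r.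
have : (gdeg e x)%:R < t :> R by apply: (le_lt_trans _ ht); rewrite ler_nat.
by rewrite ltNge hx.
Qed.

Lemma maxdeg_ge1 : (exists x y, e x y) -> (1 <= maxdeg e)%N.
Proof.
move=> [x [y exy]]; apply: (@leq_trans (sdeg e [set: V] x)).
  by rewrite /sdeg card_gt0; apply/set0Pn; exists y; rewrite !inE.
by rewrite /maxdeg /maxdeg_sub; rewrite (bigD1 x) ?finset.in_setT //=; exact: leq_maxl.
Qed.
End G.
Section P.
Context {R : realType} {d : measure_display} {Omega : measurableType d} (P : probability Omega R).

Definition pr (A : set Omega) : R := fine (P A).

Lemma prE A : measurable A -> P A = (pr A)%:E.
Proof. by move=> mA; rewrite /pr fineK // fin_num_measure. Qed.

Lemma pr_ge0 A : 0 <= pr A.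
Proof. by rewrite /pr fine_ge0 // measure_ge0. Qed.

Lemma pr_le A B : measurable A -> measurable B -> A `<=` B -> pr A <= pr B.
Proof.
move=> mA mB AB; rewrite -lee_fin -!prE //; by apply: le_measure; rewrite ?inE.
Qed.

Lemma prU A B : measurable A -> measurable B -> pr (A `|` B) <= pr A + pr B.
Proof.
move=> mA mB; rewrite -lee_fin EFinD -!prE //; last exact: measurableU.
exact: measureU2.
Qed.

Lemma prC A : measurable A -> pr (~` A) = 1 - pr A.
Proof.
move=> mA; apply/EFin_inj; rewrite EFinB -!prE //; last exact: measurableC.
exact: probability_setC.
Qed.

Lemma mpre {d1 : measure_display} {T1 : measurableType d1} {X : T1 -> R} {A : set R} : measurable_fun setT X -> measurable A ->
  measurable (X @^-1` A).
Proof. by move=> mX mA; rewrite -[X @^-1` A]setTI; exact: mX. Qed.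

Lemma lap_ge b X t : 0 < b -> 0 <= t -> is_laplace P b X ->
  pr (X @^-1` `[t, +oo[) = expR (- t / b) / 2.
Proof.
move=> b0 t0 [mX HX]; apply/EFin_inj; rewrite -prE; last exact: mpre.
by rewrite HX //; exact: upper_int.
Qed.

Lemma lap_le b X t : 0 < b -> 0 <= t -> is_laplace P b X ->
  pr (X @^-1` `]-oo, (- t)%R]) = expR (- t / b) / 2.
Proof.
move=> b0 t0 [mX HX]; apply/EFin_inj; rewrite -prE; last exact: mpre.
by rewrite HX //; exact: lower_int.
Qed.

Lemma lap_lt b X c : 0 < b -> 0 <= c -> is_laplace P b X ->
  pr (X @^-1` `]-oo, c[) = 1 - expR (- c / b) / 2.
Proof.
move=> b0 c0 hX; have mX := hX.1.
have -> : X @^-1` `]-oo, c[ = ~` (X @^-1` `[c, +oo[).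
  apply/seteqP; split => w /=; rewrite !in_itv /= ?andbT.
    by move=> h; apply/negP; rewrite -ltNge.
  by move/negP; rewrite -ltNge.
rewrite prC ?(@lap_ge b X c b0 c0 hX) //; apply: mpre => //.
Qed.
End P.
Section N.
Context {R : realType}.
Lemma geom_key (p : R) (m : nat) : 0 <= p <= 1 -> (1 - p) ^+ m * (1 + m%:R * p) <= 1.
Proof.
move=> /andP [p0 p1]; elim: m => [|m IH]; first by rewrite expr0 mul0r addr0 mul1r.
have q0 : 0 <= (1 - p) ^+ m by apply: exprn_ge0; lra.
rewrite exprSr -mulrA; apply: le_trans IH; apply: ler_wpM2l => //.
rewrite -natr1 /=; have m0 : 0 <= m%:R :> R by [].
nra.
Qed.

Lemma geom_small (p : R) : 0 < p < 1 -> exists m : nat, (1 - p) ^+ m <= p.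
Proof.
move=> /andP [p0 p1].
exists (Num.truncn (p ^- 2)).+1.
set m := (Num.truncn (p ^- 2)).+1.
have hm : p ^- 2 < m%:R by exact: truncnS_gt.
have key := @geom_key p m ltac:(apply/andP; split; lra).
have q0 : 0 <= (1 - p) ^+ m by apply: exprn_ge0; lra.
have h1 : p^-1 <= 1 + m%:R * p.
  have : p ^- 2 * p <= m%:R * p by apply: ler_wpM2r; lra.
  rewrite expr2 invfM -mulrA mulVf ?mulr1; last by rewrite gt_eqF.
  lra.
have h2 : (1 - p) ^+ m * p^-1 <= 1.
  apply: le_trans key; apply: ler_wpM2l => //.
have : (1 - p) ^+ m * p^-1 * p <= 1 * p by apply: ler_wpM2r => //; lra.
by rewrite -mulrA mulVf ?mulr1 ?mul1r // gt_eqF.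
Qed.
End N.
Section M.
Context {R : realType}.

Lemma meas_le_fun {d1 : measure_display} {T1 : measurableType d1} (f : T1 -> R) B :
  measurable_fun setT f -> measurable [set x | f x <= B].
Proof.
move=> mf; have -> : [set x | f x <= B] = f @^-1` `]-oo, B].
  by apply/seteqP; split => x /=; rewrite in_itv.
exact: mpre.
Qed.

Lemma meas_lt_fun {d1 : measure_display} {T1 : measurableType d1} (f g : T1 -> R) :
  measurable_fun setT f -> measurable_fun setT g -> measurable [set x | f x < g x].
Proof.
move=> mf mg; have -> : [set x | f x < g x] = (fun x => g x - f x) @^-1` `]0, +oo[.
  by apply/seteqP; split => x /=; rewrite in_itv /= andbT subr_gt0.
apply: mpre => //; exact: measurable_realfun.measurable_funB.
Qed.

Lemma measN (V : finType) (e : rel V) : measurable_fun setT (fun t : R => (N_at_least e t)%:R : R).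
Proof.
have -> : (fun t : R => (N_at_least e t)%:R : R) =
   (fun t => \sum_(v <- enum V) (\1_([set` `]-oo, (gdeg e v)%:R]]) t : R)).
  apply/funext => t; rewrite N_atE -sum1_card natr_sum big_mkcond /= big_enum /=.
  apply: eq_bigr => v _; rewrite indicE finset.in_set /=.
  case: ifPn => h; [rewrite mem_set // | rewrite memNset //]; rewrite /= in_itv /= ?(negbTE h) //.
apply: measurable_sum => v; exact: measurable_realfun.measurable_indic.
Qed.
Lemma meas_pass (V : finType) (e : rel V) (eps beta : R) (d : measure_display)
  (Omega : measurableType d) (X : nat -> Omega -> R) :
  (forall i, measurable_fun setT (X i)) ->
  forall j, measurable [set w | round_passes e eps beta X j w].
Proof.
move=> hX j; rewrite /round_passes.
apply: (@meas_lt_fun _ _ (fun w => threshold eps beta + X 0%N w) (fun w => Q_delN e (2 ^ j) + X j.+2 w)).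
  by apply: measurable_realfun.measurable_funD => //; exact: measurable_cst.
by apply: measurable_realfun.measurable_funD => //; exact: measurable_cst.
Qed.

Lemma meas_target (V : finType) (e : rel V) (eps beta : R) (d : measure_display)
  (Omega : measurableType d) (X : nat -> Omega -> R) (C : nat -> R -> Prop) :
  (forall i, measurable_fun setT (X i)) ->
  (forall i, measurable [set x | C i x]) ->
  measurable [set w | exists i, stops_at e eps beta X i w /\ C i (X 1%N w)].
Proof.
move=> hX hC.
have -> : [set w | exists i, stops_at e eps beta X i w /\ C i (X 1%N w)] =
  \bigcup_i ([set w | round_passes e eps beta X i w] `&`
     \bigcap_j (if (j < i)%N then ~` [set w | round_passes e eps beta X j w] else setT)
     `&` (X 1%N @^-1` [set x | C i x])).
  apply/seteqP; split => w /=.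
    move=> [i [[pi hj] Ci]]; exists i => //; split => //; split => // j _.
    by case: ifP => // ji; exact: hj j ji.
  move=> [i _ [[pi hj] Ci]]; exists i; split => //; split => // j ji.
  by have := hj j I; rewrite ji.
apply: bigcupT_measurable => i; apply: measurableI; last exact: mpre.
apply: measurableI; first exact: meas_pass.
apply: bigcapT_measurable => j; case: ifP => _; last exact: measurableT.
by apply: measurableC; exact: meas_pass.
Qed.
End M.
Section M2.
Context {R : realType}.
Lemma meas_le2 {d1 : measure_display} {T1 : measurableType d1} (f g : T1 -> R) :
  measurable_fun setT f -> measurable_fun setT g -> measurable [set x | f x <= g x].
Proof.
move=> mf mg; have -> : [set x | f x <= g x] = (fun x => g x - f x) @^-1` `[0, +oo[.
  by apply/seteqP; split => x /=; rewrite in_itv /= andbT subr_ge0.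
apply: mpre => //; exact: measurable_realfun.measurable_funB.
Qed.
Lemma test (A B : R) : measurable_fun setT (fun x : R => A + x + B + 1).
Proof.
by repeat (apply: measurable_realfun.measurable_funD || apply: measurable_cst || apply: measurable_id).
Qed.
End M2.
Section Main.
Context {R : realType}.

Lemma sub_bigU {T : Type} (F : nat -> set T) n i : (i < n)%N ->
  F i `<=` \big[setU/set0]_(j < n) F j.
Proof. by move=> hi; rewrite (bigD1 (Ordinal hi)) //=; exact: subsetUl. Qed.

Lemma prBig {d} {Omega : measurableType d} (P : probability Omega R) (F : nat -> set Omega) n :
  (forall i, measurable (F i)) ->
  pr P (\big[setU/set0]_(j < n) F j) <= \sum_(j < n) pr P (F j).
Proof.
move=> mF; elim: n => [|n IH]; first by rewrite !big_ord0 /pr measure0.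
rewrite !big_ord_recr /=; apply: (le_trans (prU P _ _ _ _)).
- by apply: bigsetU_measurable => j _.
- exact: mF.
- by rewrite lerD2r.
Qed.

Lemma expR_lnV (c y : R) : 0 < c -> 0 < y -> expR (- (c * ln y) / c) / 2 = y^-1 / 2.
Proof.
move=> c0 y0; congr (_ / _).
have -> : - (c * ln y) / c = - ln y by field; rewrite gt_eqF.
by rewrite expRN lnK // posrE.
Qed.

Lemma prod_const (s : seq nat) (q : R) : (\prod_(i <- s) q%:E)%E = (q ^+ size s)%:E.
Proof.
elim: s => [|a s IH]; first by rewrite big_nil expr0.
by rewrite big_cons IH /= exprS EFinM.
Qed.

Lemma stop_exists (V : finType) (e : rel V) (eps beta : R) d (Omega : measurableType d)
  (X : nat -> Omega -> R) w j0 :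
  round_passes e eps beta X j0 w -> exists i, stops_at e eps beta X i w /\ (i <= j0)%N.
Proof.
move=> h0.
have exP : exists j, (threshold eps beta + X 0%N w < Q_delN e (2 ^ j) + X j.+2 w).
  by exists j0.
case: (ex_minnP exP) => i pi imin; exists i; split; last exact: imin.
split => // j ji hj; have := imin j hj; by rewrite leqNgt ji.
Qed.

Lemma tauE (V : finType) (e : rel V) (eps beta delta : R) d (Omega : measurableType d)
  (X : nat -> Omega -> R) i w :
  tau_star e eps beta delta X i w = (2 ^ i)%:R + (delN_cost e (2 ^ i))%:R + X 1%N w
     + (2 / eps) * ln (Num.max (delta^-1) (2 / beta)) + 1.
Proof. by rewrite /tau_star /Q_delN normrN normr_nat. Qed.

Lemma passE (V : finType) (e : rel V) (eps beta : R) d (Omega : measurableType d)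
  (X : nat -> Omega -> R) i w :
  round_passes e eps beta X i w <->
  threshold eps beta + X 0%N w < - (delN_cost e (2 ^ i))%:R + X i.+2 w.
Proof. by []. Qed.

Lemma prU_le {d} {Omega : measurableType d} (P : probability Omega R) A B (a c : R) :
  measurable A -> measurable B -> pr P A <= a -> pr P B <= c -> pr P (A `|` B) <= a + c.
Proof.
move=> mA mB hA hB; apply: (le_trans (prU P _ _ mA mB)); exact: lerD.
Qed.

Lemma notge (x t : R) : ~ (x \in `[t, +oo[) -> x < t.
Proof. by rewrite in_itv /= andbT => /negP; rewrite -ltNge. Qed.

Lemma notle (x t : R) : ~ (x \in `]-oo, t]) -> t < x.
Proof. by rewrite in_itv /= => /negP; rewrite -ltNge. Qed.

Lemma notlt (x t : R) : ~ (x \in `]-oo, t[) -> t <= x.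
Proof. by rewrite in_itv /= => /negP; rewrite -leNgt. Qed.

Lemma meas_and (P1 P2 : R -> Prop) : measurable [set x | P1 x] -> measurable [set x | P2 x] ->
  measurable [set x | P1 x /\ P2 x].
Proof. by move=> h1 h2; exact: measurableI. Qed.
End Main.
Arguments stop_exists {R V e eps beta d Omega X w j0}.

Theorem mainTheorem5 (R : realType) (d : measure_display) (Omega : measurableType d)
  (P : probability Omega R) (V : finType) (e : rel V)
  (eps beta delta : R) (X : nat -> Omega -> R) :
  simple_graph e -> (exists x y, e x y) ->
  0 < eps -> 0 < beta < 1 -> 0 < delta < 1 ->
  is_laplace P (4 / eps) (X 0%N) ->
  is_laplace P (2 / eps) (X 1%N) ->
  (forall i, is_laplace P (4 / eps) (X i.+2)) ->
  mutually_independent P X ->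
  ((1 - beta)%:E <= P [set w | exists i, stops_at e eps beta X i w /\
      (tau_star e eps beta delta X i w <=
        2 * (maxdeg e)%:R + (8 / eps) * ln (log2 (4 * (maxdeg e)%:R))
        + (16 / eps) * ln (4 / beta)
        + (4 / eps) * ln (Num.max (delta^-1) (2 / beta)) + 1 /\
      (N_at_least e (tau_star e eps beta delta X i w))%:R <=
        (8 / eps) * ln (log2 (4 * (maxdeg e)%:R)) + (16 / eps) * ln (4 / beta))%R]
   /\
   (1 - delta)%:E <= P [set w | exists i, stops_at e eps beta X i w /\
      (tau_star e eps beta delta X i w
        + (N_at_least e (tau_star e eps beta delta X i w))%:R
      <= 2 * tau_star e eps beta delta X i w)%R])%E.
Proof.
move=> _ hedge eps0 /andP[be0 be1] /andP[de0 de1] hX0 hX1 hX2 hind.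
have hXm : forall i, measurable_fun setT (X i).
  by case=> [|[|i]]; [exact: hX0.1 | exact: hX1.1 | exact: (hX2 i).1].
have Dn1 : (1 <= maxdeg e)%N by exact: maxdeg_ge1.
set Dn := maxdeg e in Dn1 *.
set i0 := up_log 2 Dn.
have hi0 : (Dn <= 2 ^ i0)%N by exact: up_logP.
have hi0' : (2 ^ i0 <= 2 * Dn)%N.
  case Ei: i0 => [|i']; first by rewrite expn0; lia.
  have h1 : (1 < Dn)%N.
    rewrite ltnNge; apply/negP => h; have : Dn = 1%N by lia.
    by move=> hD; move: Ei; rewrite /i0 hD up_log1.
  have := up_log_gtn (isT : (1 < 2)%N) h1; rewrite -/i0 Ei /= => h2.
  by rewrite expnS leq_mul2l /= ltnW.
have ln2 : 0 < ln (2 : R) by apply: ln_gt0; lra.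
set k := log2 (4 * Dn%:R : R).
have hk : (i0.+1)%:R <= k.
  rewrite /k /log2 ler_pdivlMr //.
  have -> : (i0.+1)%:R * ln (2:R) = ln (2 ^+ i0.+1) by rewrite lnXn ?mulr_natl //; lra.
  rewrite ler_ln ?posrE; last 2 first.
  - by apply: exprn_gt0; lra.
  - have : (1 <= Dn%:R :> R) by rewrite ler1n. lra.
  rewrite -natrX -natrM ler_nat expnS; lia.
have k1 : 1 <= k by apply: le_trans hk; rewrite ler1n.
set lk := ln k.
have lk0 : 0 <= lk by exact: ln_ge0.
set b := 4 / eps.
have b0 : 0 < b by rewrite divr_gt0.
set b1 := 2 / eps.
have b10 : 0 < b1 by rewrite divr_gt0.
set L := ln (4 / beta).
have L0 : 0 < L by apply: ln_gt0; rewrite ltr_pdivlMr //; lra.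
set M := Num.max delta^-1 (2 / beta).
have M2 : 2 / beta <= M by rewrite /M le_max lexx orbT.
have Md : delta^-1 <= M by rewrite /M le_max lexx.
have M1 : 1 < M.
  apply: lt_le_trans M2; rewrite ltr_pdivlMr //; lra.
set lM := ln M.
have lM0 : 0 <= lM by apply: ln_ge0; lra.
have hT : threshold eps beta = - (2 * (b * L)).
  by rewrite /threshold /b /L; field; rewrite gt_eqF.
have hDpos : (1 <= Dn%:R :> R) by rewrite ler1n.
split.
-
  set y4 := 4 / beta * k.
  have y41 : 1 <= y4.
    have : 1 <= 4 / beta by rewrite ler_pdivlMr //; lra.
    move=> h; rewrite /y4; have : 1 * 1 <= 4 / beta * k by apply: ler_pM => //; lra.
    by rewrite mul1r.
  have hy4 : ln y4 = L + lk.
    by rewrite /y4 lnM ?posrE //; [rewrite divr_gt0 //; lra | lra].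
  set tU := b * ln y4.
  have htU : tU = b * L + b * lk by rewrite /tU hy4 mulrDr.
  have bL0 : 0 <= b * L by rewrite mulr_ge0 // ltW.
  have blk0 : 0 <= b * lk by rewrite mulr_ge0 // ltW.
  have b1lM0 : 0 <= b1 * lM by rewrite mulr_ge0 // ltW.
  have tU0 : 0 <= tU by rewrite /tU mulr_ge0 ?ln_ge0 // ltW.
  set A1 := X 0%N @^-1` `[b * L, +oo[.
  set A2 := X i0.+2 @^-1` `]-oo, (- (b * L))%R].
  set A3 := X 0%N @^-1` `]-oo, (- (b * L))%R].
  set G4 := fun j => X j.+2 @^-1` `[tU, +oo[.
  set A4 := \big[setU/set0]_(j < i0.+1) G4 j.
  set A5 := X 1%N @^-1` `[b1 * lM, +oo[.
  set A6 := X 1%N @^-1` `]-oo, (- (b1 * lM))%R].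
  have mA1 : measurable A1 by exact: mpre.
  have mA2 : measurable A2 by exact: mpre.
  have mA3 : measurable A3 by exact: mpre.
  have mG4 : forall j, measurable (G4 j) by move=> j; exact: mpre.
  have mA4 : measurable A4 by apply: bigsetU_measurable => j _.
  have mA5 : measurable A5 by exact: mpre.
  have mA6 : measurable A6 by exact: mpre.
  have p1 : pr P A1 <= beta / 8.
    rewrite /A1 (lap_ge P b (X 0%N) (b * L) b0 bL0 hX0) expR_lnV //; last by rewrite divr_gt0 //; lra.
    by rewrite invf_div; lra.
  have p2 : pr P A2 <= beta / 8.
    rewrite /A2 (lap_le P b (X i0.+2) (b * L) b0 bL0 (hX2 i0)) expR_lnV //; last by rewrite divr_gt0 //; lra.
    by rewrite invf_div; lra.
  have p3 : pr P A3 <= beta / 8.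
    rewrite /A3 (lap_le P b (X 0%N) (b * L) b0 bL0 hX0) expR_lnV //; last by rewrite divr_gt0 //; lra.
    by rewrite invf_div; lra.
  have p4 : pr P A4 <= beta / 8.
    apply: (le_trans (prBig P _ _ mG4)).
    have hG : forall j, pr P (G4 j) = y4^-1 / 2.
      move=> j; rewrite /G4 (lap_ge P b (X j.+2) tU b0 tU0 (hX2 j)) expR_lnV //; lra.
    under eq_bigr do rewrite hG.
    rewrite sumr_const card_ord -mulr_natl.
    have hv : 0 <= y4^-1 / 2 by rewrite divr_ge0 // invr_ge0; lra.
    apply: (@le_trans _ _ ((i0.+1)%:R * (y4^-1 / 2))); first by rewrite mulr1 mulr_natl.
    apply: (le_trans (ler_wpM2r hv hk)).
    rewrite /y4 invfM invf_div; have k0 : k != 0 by rewrite gt_eqF //; lra.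
    suff -> : k * (beta / 4 / k / 2) = beta / 8 by [].
    by field.
  have Mi : M^-1 <= beta / 2.
    have h2b : 0 < 2 / beta by rewrite divr_gt0.
    by rewrite -invf_div lef_pV2 ?posrE //; lra.
  have p5 : pr P A5 <= beta / 4.
    rewrite /A5 (lap_ge P b1 (X 1%N) (b1 * lM) b10 b1lM0 hX1) expR_lnV //; lra.
  have p6 : pr P A6 <= beta / 4.
    rewrite /A6 (lap_le P b1 (X 1%N) (b1 * lM) b10 b1lM0 hX1) expR_lnV //; lra.
  set F1 := A1 `|` A2 `|` A3 `|` A4 `|` A5 `|` A6.
  have mF1 : measurable F1 by rewrite /F1; repeat apply: measurableU.
  have pF1 : pr P F1 <= beta.
    have : pr P F1 <= beta / 8 + beta / 8 + beta / 8 + beta / 8 + beta / 4 + beta / 4.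
      by rewrite /F1; repeat apply: prU_le => //; repeat apply: measurableU.
    lra.
  have e8 : 8 / eps * lk = 2 * (b * lk) by rewrite /b; field; rewrite gt_eqF.
  have e16 : 16 / eps * L = 4 * (b * L) by rewrite /b; field; rewrite gt_eqF.
  have e4 : 4 / eps * lM = 2 * (b1 * lM) by rewrite /b1; field; rewrite gt_eqF.
  pose tstar i (x : R) := (2 ^ i)%:R + `|Q_delN e (2 ^ i)| + x + 2 / eps * ln M + 1.
  have mts : forall i, measurable_fun setT (tstar i).
    move=> i; rewrite /tstar.
    by repeat (apply: measurable_realfun.measurable_funD || apply: measurable_cst || apply: measurable_id).
  have mT : measurable [set w | exists i, stops_at e eps beta X i w /\
      (tau_star e eps beta delta X i w <=
        2 * Dn%:R + (8 / eps) * lk + (16 / eps) * L + (4 / eps) * lM + 1 /\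
      (N_at_least e (tau_star e eps beta delta X i w))%:R <=
        (8 / eps) * lk + (16 / eps) * L)].
    apply: (@meas_target _ _ _ _ _ _ _ _
       (fun i x => tstar i x <= 2 * Dn%:R + (8 / eps) * lk + (16 / eps) * L + (4 / eps) * lM + 1 /\
          (N_at_least e (tstar i x))%:R <= (8 / eps) * lk + (16 / eps) * L)) => // i.
    apply: meas_and.
      by apply: meas_le_fun.
    apply: meas_le_fun; exact: (measurableT_comp (measN _ e) (mts i)).
  rewrite (prE P _ mT) lee_fin.
  apply: (@le_trans _ _ (pr P (~` F1))); first by rewrite prC //; lra.
  apply: pr_le => //; first exact: measurableC.
  move=> w /= hw.
  have nA1 : X 0%N w < b * L by apply: notge => h; apply: hw; rewrite /F1; left; left; left; left; left.
  have nA2 : - (b * L) < X i0.+2 w by apply: notle => h; apply: hw; rewrite /F1; left; left; left; left; right.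
  have nA3 : - (b * L) < X 0%N w by apply: notle => h; apply: hw; rewrite /F1; left; left; left; right.
  have nA4 : forall j, (j <= i0)%N -> X j.+2 w < tU.
    move=> j hj; apply: notge => h; apply: hw; rewrite /F1; left; left; right.
    exact: (@sub_bigU _ G4 i0.+1 j hj).
  have nA5 : X 1%N w < b1 * lM by apply: notge => h; apply: hw; rewrite /F1; left; right.
  have nA6 : - (b1 * lM) < X 1%N w by apply: notle => h; apply: hw; rewrite /F1; right.
  have pass0 : round_passes e eps beta X i0 w.
    apply/passE; rewrite delN0 // hT; lra.
  have [i [stp hii0]] := stop_exists pass0.
  have [pi _] := stp.
  exists i; split => //.
  rewrite tauE -/b1 -/M -/lM.
  move/passE: pi; set c := delN_cost e (2 ^ i) => pi.
  have h2i : (2 ^ i)%:R <= 2 * Dn%:R :> R.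
    rewrite -natrM ler_nat; apply: leq_trans hi0'; by rewrite leq_exp2l.
  have hXi := nA4 i hii0.
  split.
    rewrite e8 e16 e4; rewrite hT in pi; lra.
  have hN : (N_at_least e ((2 ^ i)%:R + c%:R + X 1%N w + b1 * lM + 1) <= c)%N.
    apply: N_le_delN; rewrite natrD; lra.
  have : (N_at_least e ((2 ^ i)%:R + c%:R + X 1%N w + b1 * lM + 1))%:R <= c%:R :> R by rewrite ler_nat.
  rewrite e8 e16; rewrite hT in pi; lra.
-
  have bL0 : 0 <= b * L by rewrite mulr_ge0 // ltW.
  have b1lM0 : 0 <= b1 * lM by rewrite mulr_ge0 // ltW.
  have d2 : 0 < 2 / delta by rewrite divr_gt0.
  set a7 := b * ln (2 / delta).
  have a70 : 0 <= a7.
    rewrite /a7 mulr_ge0 //; [exact: ltW | apply: ln_ge0; rewrite ler_pdivlMr //; lra].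
  set p := delta / 4.
  have [m hm] : exists m : nat, (1 - p) ^+ m <= p by apply: geom_small; rewrite /p; apply/andP; split; lra.
  set s := iota i0.+2 m.
  set A6 := X 1%N @^-1` `]-oo, (- (b1 * lM))%R].
  set A7 := X 0%N @^-1` `[a7, +oo[.
  set A8 := \bigcap_(i in [set i | i \in s]) (X i @^-1` `]-oo, a7[).
  have mA6 : measurable A6 by exact: mpre.
  have mA7 : measurable A7 by exact: mpre.
  have mA8 : measurable A8 by apply: bigcap_measurableType => i _; exact: mpre.
  have Mi : M^-1 <= delta.
    have hd : 0 < delta^-1 by rewrite invr_gt0.
    by rewrite -[X in _ <= X]invrK lef_pV2 ?posrE //; lra.
  have p6 : pr P A6 <= delta / 2.
    rewrite /A6 (lap_le P b1 (X 1%N) (b1 * lM) b10 b1lM0 hX1) expR_lnV //; lra.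
  have p7 : pr P A7 <= delta / 4.
    rewrite /A7 (lap_ge P b (X 0%N) a7 b0 a70 hX0) expR_lnV // invf_div; lra.
  have hlap : forall i, i \in s -> is_laplace P b (X i).
    move=> [|[|j]]; rewrite /s mem_iota //; move=> _; exact: hX2.
  have p8 : pr P A8 <= p.
    have hI := hind s (fun _ => [set` `]-oo, a7[]) (iota_uniq _ _) (fun i _ => measurable_itv _).
    have -> : pr P A8 = (1 - p) ^+ m; last by [].
    rewrite /pr /A8 hI.
    rewrite (eq_big_seq (fun=> (1 - p)%:E)); last first.
      move=> i hi; rewrite (prE P); last exact: mpre.
      rewrite (lap_lt P b (X i) a7 b0 a70 (hlap i hi)) expR_lnV // invf_div.
      by congr (EFin (_ - _)); rewrite /p; field.
    by rewrite prod_const size_iota.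
  set F2 := A6 `|` A7 `|` A8.
  have mF2 : measurable F2 by rewrite /F2; repeat apply: measurableU.
  have pF2 : pr P F2 <= delta.
    have : pr P F2 <= delta / 2 + delta / 4 + p.
      by rewrite /F2; repeat apply: prU_le => //; repeat apply: measurableU.
    rewrite /p; lra.
  pose tstar i (x : R) := (2 ^ i)%:R + `|Q_delN e (2 ^ i)| + x + 2 / eps * ln M + 1.
  have mts : forall i, measurable_fun setT (tstar i).
    move=> i; rewrite /tstar.
    by repeat (apply: measurable_realfun.measurable_funD || apply: measurable_cst || apply: measurable_id).
  have mT : measurable [set w | exists i, stops_at e eps beta X i w /\
      (tau_star e eps beta delta X i w
        + (N_at_least e (tau_star e eps beta delta X i w))%:R
      <= 2 * tau_star e eps beta delta X i w)].
    apply: (@meas_target _ _ _ _ _ _ _ _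
       (fun i x => tstar i x + (N_at_least e (tstar i x))%:R <= 2 * tstar i x)) => // i.
    apply: (@meas_le2 _ _ _ (fun x => tstar i x + (N_at_least e (tstar i x))%:R) (fun x => 2 * tstar i x)).
      apply: measurable_realfun.measurable_funD; first exact: mts.
      exact: (measurableT_comp (measN _ e) (mts i)).
    apply: measurable_realfun.measurable_funM; first exact: measurable_cst.
    exact: mts.
  rewrite (prE P _ mT) lee_fin.
  apply: (@le_trans _ _ (pr P (~` F2))); first by rewrite prC //; lra.
  apply: pr_le => //; first exact: measurableC.
  move=> w /= hw.
  have nA6 : - (b1 * lM) < X 1%N w by apply: notle => h; apply: hw; rewrite /F2; left; left.
  have nA7 : X 0%N w < a7 by apply: notge => h; apply: hw; rewrite /F2; left; right.
  have nA8 : ~ A8 w by move=> h; apply: hw; rewrite /F2; right.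
  have [j [js hj]] : exists j, j \in s /\ a7 <= X j w.
    apply: contra_notP nA8 => H j /= js; rewrite in_itv /= ltNge; apply/negP => hle.
    by apply: H; exists j.
  move: js hj; case: j => [|[|j]]; rewrite /s mem_iota // => /andP[hj1 _] hj.
  have pass0 : round_passes e eps beta X j w.
    apply/passE; rewrite delN0; last first.
      by apply: leq_trans hi0 _; rewrite leq_exp2l //; lia.
    rewrite hT; lra.
  have [i [stp _]] := stop_exists pass0.
  exists i; split => //.
  rewrite tauE -/b1 -/M -/lM.
  set c := delN_cost e (2 ^ i).
  have hN : (N_at_least e ((2 ^ i)%:R + c%:R + X 1%N w + b1 * lM + 1) <= c)%N.
    apply: N_le_delN; rewrite natrD; lra.
  have : (N_at_least e ((2 ^ i)%:R + c%:R + X 1%N w + b1 * lM + 1))%:R <= c%:R :> R by rewrite ler_nat.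
  have : 0 <= (2 ^ i)%:R :> R by [].
  lra.
Qed.
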